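(* Let $K,D,U$ be integers with $0\le U\le D$ and $U+D\le K-2$, and let $\mathbb{F}_q$ be any finite field. Consider the two-sided single unicast index coding problem with $K$ messages and $K$ receivers, where $R_k$ wants $x_k$ and has side-information $\{x_{k-U},\dots,x_{k-1}\}\cup\{x_{k+1},\dots,x_{k+D}\}$ (indices modulo $K$). Let $a=\gcd(K,D-U,U+1)$, $u_a=\frac{U+1}{a}$, $\Delta_a=\frac{D-U}{a}$, $K_a=\frac{K}{a}$, and let each message be $x_k=(x_{k,1},\dots,x_{k,u_a})\in\mathbb{F}_q^{u_a}$. Let $\mathbf{L}$ be the AIR matrix of size $K_a\times(K_a-\Delta_a)$ with rows $L_0,\dots,L_{K_a-1}$ (row indices taken modulo $K_a$). For $s\in[0:K_a-1]$ let $\mathbf{V}_s$ be the $u_a\times(K_a-\Delta_a)$ matrix with rows $L_s,L_{s+1},\dots,L_{s+u_a-1}$, let $\tilde{\mathbf{V}}_s$ be the $(au_a)\times(K_a-\Delta_a)$ matrix consisting of $a$ copies of $\mathbf{V}_s$ stacked vertically, and let $\mathbf{L}^{(2s)}$ be the $Ku_a\times(K_a-\Delta_a)$ matrix obtained by stacking $\tilde{\mathbf{V}}_0,\tilde{\mathbf{V}}_1,\dots,\tilde{\mathbf{V}}_{K_a-1}$ vertically. Then $\mathbf{L}^{(2s)}$ is an encoding matrix of an optimal length $u_a$-dimensional vector linear index code for this problem: with $\mathbf{x}=[x_{0,1}\,\cdots\,x_{0,u_a}\;x_{1,1}\,\cdots\,x_{1,u_a}\;\cdots\;x_{K-1,1}\,\cdots\,x_{K-1,u_a}]$,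 the broadcast symbols $[c_0\,\cdots\,c_{K_a-\Delta_a-1}]=\mathbf{x}\mathbf{L}^{(2s)}$ allow every receiver $R_k$ to decode $x_k$ from them and its side-information, and the code has rate $\frac{U+1}{K-D+U}$, equal to the symmetric capacity.
   Context: Index coding: a $p$-dimensional vector linear index code of length $N$ maps the messages $x_k\in\mathbb{F}_q^p$ linearly to $N$ broadcast symbols; receiver $R_k$ must recover $x_k$ from the broadcast symbols and its side-information; rate is $p/N$. For this problem (with $U+D\le K-2$) the symmetric capacity is $\frac{U+1}{K-D+U}$, and optimal length means rate equal to capacity. AIR matrix: for integers $m\ge n\ge1$, the binary $m\times n$ matrix built by: letting $\mathbf{I}_{c\times d}$ ($d\mid c$) be $c/d$ copies of $\mathbf{I}_d$ stacked vertically; starting with an empty $m\times n$ matrix whose unfilled part is everything; Step 1: $m=qn+r$, $0\le r<n$, fill the first $qn$ rows of the unfilled part with $\mathbf{I}_{qn\times n}$, unfilled part becomes the last $r$ rows, stop if $r=0$; Step 2: $n=q'r+r'$, $0\le r'<r$, fill the first $q'r$ columns of the unfilled part with $q'$ copies of $\mathbf{I}_r$ placed side by side, unfilled part becomes its last $r'$ columns, stop if $r'=0$, else set $m\leftarrow r$, $n\leftarrow r'$ and go to Step 1. *)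

(* Defs.v *)
From mathcomp Require Import all_boot all_order all_algebra.
Set Implicit Arguments. Unset Strict Implicit. Unset Printing Implicit Defensive.
Import GRing.Theory.

(* ---------- AIR matrix ---------------------------------------------------
   air_rec fuel m n i j = entry (i, j) (0-indexed) of the m x n AIR matrix,
   following the recursive construction literally:
   Step 1: m = q n + r; first q n rows are q stacked copies of I_n
           (entry (i,j) = [i mod n == j]); remaining part = last r rows.
   Step 2: n = q' r + r'; first q' r columns of the remaining r x n part are
           q' copies of I_r side by side (entry (i',j) = [i' == j mod r]);
           remaining part = last r' columns; recurse with (m,n) := (r,r').
   [fuel] bounds the recursion depth (n strictly decreases). *)
Fixpoint air_rec (fuel m n i j : nat) : bool :=
  match fuel with
  | 0 => false
  | fuel'.+1 =>
    if n == 0 then false else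
    let q := m %/ n in let r := m %% n in
    if i < q * n then i %% n == j
    else
      let i' := i - q * n in
      if r == 0 then false else
      let q' := n %/ r in let r' := n %% r in
      if j < q' * r then i' == j %% r
      else air_rec fuel' r r' i' (j - q' * r)
  end.

Definition air_entry (m n i j : nat) : bool := air_rec (m + n).+1 m n i j.

Definition air_mx (R : pzRingType) (m n : nat) : 'M[R]_(m, n) :=
  \matrix_(i < m, j < n) (if air_entry m n i j then 1%R else 0%R).

Definition a_par (K D U : nat) : nat := gcdn K (gcdn (D - U) U.+1).
Definition ua (K D U : nat) : nat := U.+1 %/ a_par K D U.
Definition Da (K D U : nat) : nat := (D - U) %/ a_par K D U.
Definition Ka (K D U : nat) : nat := K %/ a_par K D U.
Definition Ncode (K D U : nat) : nat := Ka K D U - Da K D U.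

(* ---------- the encoding matrix L^(2s) ----------
   Row r of L^(2s) (0-indexed, r < K u_a): the rows are the blocks
   V~_0, ..., V~_{K_a-1}, each of a*u_a rows, V~_s = a copies of V_s,
   V_s = rows L_s, ..., L_{s+u_a-1} of L (indices mod K_a).
   Hence row r = L_{(s + t mod u_a) mod K_a} with s = r / (a u_a),
   t = r mod (a u_a). *)
Definition L2s (R : pzRingType) (K D U : nat) : 'M[R]_(K * ua K D U, Ncode K D U) :=
  \matrix_(r < K * ua K D U, j < Ncode K D U)
    (let au := a_par K D U * ua K D U in
     let s := r %/ au in let t := r %% au in
     if air_entry (Ka K D U) (Ncode K D U) ((s + t %% ua K D U) %% Ka K D U) j
     then 1%R else 0%R).

Definition side (K U D k j : nat) : bool :=
  has (fun d => j == (k + K - d) %% K) (iota 1 U)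
  || has (fun d => j == (k + d) %% K) (iota 1 D).

(* Messages are the rows of X : 'M_(K, p) (row k = x_k in F^p); the
   concatenated message vector x = [x_0 x_1 ... x_{K-1}] is mxvec X. *)
Definition side_info (R : pzRingType) (K U D p : nat) (k : 'I_K)
  (X : 'M[R]_(K, p)) : 'M[R]_(K, p) :=
  \matrix_(j < K, l < p) (if side K U D k j then X j l else 0%R).

Definition decodable (R : pzRingType) (K U D p N : nat)
  (L : 'M[R]_(K * p, N)) (k : 'I_K) : Prop :=
  exists dec : 'rV[R]_N -> 'M[R]_(K, p) -> 'rV[R]_p,
    forall X : 'M[R]_(K, p), dec (mxvec X *m L)%R (side_info U D k X) = row k X.

(* Main.v *)
Require Import Defs.
From mathcomp Require Import all_boot all_order all_algebra.
From mathcomp Require Import zify.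

Module Part0.
Set Implicit Arguments. Unset Strict Implicit. Unset Printing Implicit Defensive.

Lemma air_rec_fuel f1 f2 m n i j : n < f1 -> n < f2 ->
  air_rec f1 m n i j = air_rec f2 m n i j.
Proof.
elim: f1 f2 m n i j => [|f1 IH] [|f2] m n i j //= H1 H2.
case: eqP => // /eqP n0.
case: ifP => // _; case: eqP => // /eqP r0; case: ifP => // _.
have h1 : m %% n < n by rewrite ltn_pmod // lt0n.
have h2 : n %% (m %% n) < m %% n by rewrite ltn_pmod // lt0n.
apply: IH; lia.
Qed.

Definition air m n i j := air_rec n.+1 m n i j.

Lemma air_entryE m n i j : air_entry m n i j = air m n i j.
Proof. apply: air_rec_fuel; lia. Qed.

Lemma air_n0 m i j : air m 0 i j = false.
Proof. by []. Qed.

Lemma air_step m n i j : 0 < n ->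
  air m n i j = if i < m %/ n * n then i %% n == j
                else (0 < m %% n) && air n (m %% n) j (i - m %/ n * n).
Proof.
elim/ltn_ind: n m i j => n IH m i j n0.
rewrite /air /=.
have -> : (n == 0) = false by lia.
case: ifP => // _.
set r := m %% n; set i' := i - _.
case: eqP => [->|/eqP rn0] //.
have rpos : 0 < r by lia.
rewrite rpos /=.
case: ifP => [_|_]; first by rewrite eq_sym.
set r' := n %% r.
have hr : r < n by rewrite ltn_pmod.
have hr' : r' < r by rewrite ltn_pmod // lt0n.
set j'' := j - _.
have -> : air_rec n r r' i' j'' = air r r' i' j'' by apply: air_rec_fuel; lia.
case: eqP => [r'0|/eqP r'n0]; first by rewrite r'0.
rewrite IH; [|lia|lia].
case: ifP => [_|_]; first by rewrite eq_sym.
set r'' := r %% r'.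
have hr'' : r'' < r' by rewrite ltn_pmod // lt0n.

have -> : air_rec r r' r'' j'' (i' - r %/ r' * r') = air r' r'' j'' (i' - r %/ r' * r') by apply: air_rec_fuel; lia.
case: (posnP r'') => [E|_] //=; by rewrite E.
Qed.
Lemma nth_allpairs_pair (A B : Type) (a0 : A) (b0 : B) (s : seq A) (t : seq B) i j :
  i < size s -> j < size t ->
  nth (a0, b0) [seq (x, y) | x <- s, y <- t] (i * size t + j) = (nth a0 s i, nth b0 t j).
Proof.
elim: s i => [|x s IH] i //= Hi Hj.
rewrite nth_cat size_map.
case: i Hi => [|i] Hi.
- by rewrite Hj mul0n add0n (nth_map b0).
- have -> : (i.+1 * size t + j < size t) = false by rewrite mulSn; lia.
  by rewrite mulSn -addnA addKn IH.
Qed.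

Lemma mxvec_index_val m n (i : 'I_m) (j : 'I_n) : val (mxvec_index i j) = i * n + j.
Proof.
rewrite /mxvec_index /=.
set k := enum_rank (i, j).
have Hk := nth_enum_rank (i, j) (i, j). rewrite -/k in Hk.
have Hs : size (enum {: 'I_m * 'I_n}) = m * n by rewrite -cardE card_prod !card_ord.
have E : enum {: 'I_m * 'I_n} = [seq (x, y) | x <- enum 'I_m, y <- enum 'I_n].
  by rewrite enumT unlock.
have Hn : nth (i, j) (enum {: 'I_m * 'I_n}) (i * n + j) = (i, j).
  have H := @nth_allpairs_pair _ _ i j (enum 'I_m) (enum 'I_n) i j.
  rewrite !size_enum_ord in H; rewrite E H ?size_enum_ord //.
  by rewrite !nth_ord_enum.
have Hlt : i * n + j < m * n by have := ltn_ord i; have := ltn_ord j; nia.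
have Hk' : k < size (enum {: 'I_m * 'I_n}) by rewrite -cardE; exact: ltn_ord.
apply/eqP; rewrite -(nth_uniq (i, j) Hk' _ (enum_uniq _)) ?Hs ?Hk ?Hn //.
Qed.
Import GRing.Theory.
Local Open Scope ring_scope.

Section Ind.
Variable R : pzRingType.

Definition Ind (M : nat -> nat -> R) (S J : seq nat) :=
  forall c : nat -> R, (forall j, j \in J -> \sum_(i <- S) c i * M i j = 0) ->
  forall i, i \in S -> c i = 0.

Lemma Ind_nil M J : Ind M [::] J.
Proof. by move=> c _ i. Qed.

Lemma Ind_perm M S S' J J' : perm_eq S S' -> J =i J' -> Ind M S J -> Ind M S' J'.
Proof.
move=> pS eJ H c Hc i iS; have iS0 : i \in S by rewrite (perm_mem pS).
apply: (H c) iS0 => j jJ; rewrite (perm_big _ pS) /=; apply: Hc; by rewrite -eJ.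
Qed.

Lemma Ind_ext M M' S J : {in S, forall i, {in J, forall j, M i j = M' i j}} ->
  Ind M S J -> Ind M' S J.
Proof.
move=> E H c Hc; apply: H => j jJ.
rewrite (eq_big_seq (fun i => c i * M' i j)) ?Hc // => i iS; by rewrite E.
Qed.

Lemma Ind_mapS M f S J : Ind (fun i j => M (f i) j) S J -> Ind M (map f S) J.
Proof.
move=> H c Hc i /mapP[x xS ->]; apply: (H (c \o f)) => // j jJ.
by have := Hc j jJ; rewrite big_map.
Qed.

Lemma Ind_mapJ M f S J : Ind (fun i j => M i (f j)) S J -> Ind M S (map f J).
Proof. by move=> H c Hc; apply: H => j jJ; apply: Hc; apply: map_f. Qed.

Lemma sum_delta (S : seq nat) (c : nat -> R) i : uniq S -> i \in S ->
  \sum_(i' <- S) c i' * (i' == i)%:R = c i.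
Proof.
move=> uS iS; rewrite (bigD1_seq i) //= eqxx mulr1 big1 ?addr0 //.
by move=> i' /negbTE ->; rewrite mulr0.
Qed.

Lemma Ind_lower M S1 S2 J J2 : uniq S1 ->
  (forall i, i \in S1 -> exists2 j, j \in J & forall i', i' \in S1 -> M i' j = (i' == i)%:R) ->
  {subset J2 <= J} -> (forall j i', j \in J2 -> i' \in S1 -> M i' j = 0) ->
  Ind M S2 J2 -> Ind M (S1 ++ S2) J.
Proof.
move=> u1 H1 sJ Z H2 c Hc.
have c2 : forall i, i \in S2 -> c i = 0.
  apply: H2 => j jJ2; have := Hc j (sJ j jJ2); rewrite big_cat /=.
  rewrite big_seq [X in X + _]big1 ?add0r // => i iS1.
  by rewrite Z // mulr0.
move=> i; rewrite mem_cat => /orP[iS1|]; last exact: c2.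
have [j jJ Hj] := H1 i iS1.
have := Hc j jJ; rewrite big_cat /= [X in _ + X]big_seq [X in _ + X]big1 ?addr0.
  rewrite big_seq_cond (eq_bigr (fun i' => c i' * (i' == i)%:R)).
    by rewrite -big_seq_cond sum_delta.
  by move=> i' /andP[i'S1 _]; rewrite Hj.
by move=> i' i'S2; rewrite c2 // mul0r.
Qed.

Lemma Ind_upper M S1 S2 J J2 : uniq (S1 ++ S2) ->
  (forall i, i \in S1 -> exists2 j, j \in J & forall i', i' \in S1 ++ S2 -> M i' j = (i' == i)%:R) ->
  {subset J2 <= J} -> Ind M S2 J2 -> Ind M (S1 ++ S2) J.
Proof.
move=> u H1 sJ H2 c Hc.
have c1 : forall i, i \in S1 -> c i = 0.
  move=> i iS1; have [j jJ Hj] := H1 i iS1.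
  have := Hc j jJ; rewrite big_seq_cond (eq_bigr (fun i' => c i' * (i' == i)%:R)).
    by rewrite -big_seq_cond sum_delta // mem_cat iS1.
  by move=> i' /andP[i'S _]; rewrite Hj.
have c2 : forall i, i \in S2 -> c i = 0.
  apply: H2 => j jJ2; have := Hc j (sJ j jJ2); rewrite big_cat /=.
  by rewrite big_seq [X in X + _]big1 ?add0r // => i iS1; rewrite c1 // mul0r.
by move=> i; rewrite mem_cat => /orP[]; [apply: c1|apply: c2].
Qed.

End Ind.

End Part0.
Import Part0.

Module Part1.
Set Implicit Arguments. Unset Strict Implicit. Unset Printing Implicit Defensive.
Import GRing.Theory.

Lemma uniq_map_inj (T T' : eqType) (f : T -> T') (s : seq T) :
  uniq (map f s) -> {in s &, injective f}.
Proof.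
elim: s => [|x s IH] //= /andP[fx us] y z.
rewrite !in_cons => /orP[/eqP->|ys] /orP[/eqP->|zs] // E.
- by move: fx; rewrite E map_f.
- by move: fx; rewrite -E map_f.
- exact: IH.
Qed.

Lemma uniq_cat2 (s1 s2 : seq nat) : uniq s1 -> uniq s2 ->
  (forall x, x \in s1 -> x \in s2 -> False) -> uniq (s1 ++ s2).
Proof.
move=> u1 u2 H; rewrite cat_uniq u1 u2 andbT /=; apply/hasPn => x xs2.
by apply/negP => xs1; exact: H xs1 xs2.
Qed.

Lemma map_sub_iota a c k : c <= a ->
  map (fun x => (x - c)%N) (iota a k) = iota (a - c) k.
Proof.
move=> ca; have -> : a = (c + (a - c))%N by lia.
rewrite iotaDl -map_comp; rewrite addKn -[RHS]map_id; apply: eq_map => x /=; lia.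
Qed.

Lemma map_mod_iota n a c k : c <= a ->
  (forall x, a <= x < a + k -> x %% n = x - c)%N ->
  map (modn^~ n) (iota a k) = iota (a - c) k.
Proof.
move=> ca H; rewrite -map_sub_iota //; apply/eq_in_map => x; rewrite mem_iota.
exact: H.
Qed.

Lemma mod_block n k x : (k * n <= x < k.+1 * n)%N -> x %% n = (x - k * n)%N.
Proof.
move=> H; have -> : x = (k * n + (x - k * n))%N by lia.
rewrite modnMDl addKn modn_small //; lia.
Qed.

Local Open Scope ring_scope.
Section Good.
Variable R : pzRingType.

Definition AM m n : nat -> nat -> R := fun i j => (air m n i j)%:R.
Definition tr (M : nat -> nat -> R) := fun i j => M j i.
Definition W m n p := [seq ((p + t) %% m)%N | t <- iota 0 n].

Definition Good m n :=
  (forall p, (p < m)%N -> Ind (AM m n) (W m n p) (iota 0 n) /\ Ind (tr (AM m n)) (iota 0 n) (W m n p)) /\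
  (forall b, (b <= n)%N -> Ind (AM m n) (iota (m - b) b) (iota (n - b) b) /\
                         Ind (tr (AM m n)) (iota (n - b) b) (iota (m - b) b)).

Lemma AM_top m n i j : (0 < n)%N -> (i < m %/ n * n)%N -> AM m n i j = ((i %% n)%N == j)%:R.
Proof. by move=> n0 H; rewrite /AM air_step // H. Qed.

Lemma AM_bot m n i j : (0 < n)%N -> (0 < m %% n)%N ->
  AM m n (m %/ n * n + i) j = AM n (m %% n) j i.
Proof.
move=> n0 r0; rewrite /AM air_step //.
have -> : (m %/ n * n + i < m %/ n * n)%N = false by lia.
by rewrite r0 addKn.
Qed.

Lemma Ind_ident (M : nat -> nat -> R) S : uniq S ->
  (forall i j, i \in S -> j \in S -> M i j = (i == j)%:R) -> Ind M S S.
Proof.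
move=> uS H; rewrite -[S]cats0; apply: (@Ind_lower _ _ _ _ _ [::]) => //.
- rewrite cats0 => i iS; exists i => // i' i'S; exact: H.
Qed.

Lemma Mixed m n (S1 S' J Jc : seq nat) : (0 < n)%N ->
  (forall i, i \in S1 -> i < m %/ n * n)%N ->
  uniq (map (modn^~ n) S1) -> uniq J -> uniq (map (modn^~ n) S1 ++ Jc) ->
  J =i map (modn^~ n) S1 ++ Jc ->
  Ind (fun i j => AM m n (m %/ n * n + i) j) S' Jc ->
  Ind (fun i j => AM m n (m %/ n * n + j) i) Jc S' ->
  Ind (AM m n) (S1 ++ map (addn (m %/ n * n)) S') J /\
  Ind (tr (AM m n)) J (S1 ++ map (addn (m %/ n * n)) S').
Proof.
move=> n0 S1q uM uJ uMJ EJ H1 H2.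
have inj := uniq_map_inj uM.
have uS1 := map_uniq uM.
have disj : forall j, j \in Jc -> j \in map (modn^~ n) S1 -> False.
  move=> j jJc jM; move: uMJ; rewrite cat_uniq => /and3P[_ /hasPn /(_ j jJc)].
  by rewrite jM.
split.
- apply: (@Ind_lower _ _ _ _ _ Jc) => //.
  + move=> i iS1; exists (i %% n)%N; first by rewrite EJ mem_cat (map_f _ iS1).
    move=> i' i'S1; rewrite AM_top ?S1q //.
    have -> : ((i' %% n)%N == (i %% n)%N) = (i' == i) by apply/idP/idP => [/eqP E|/eqP->] //; apply/eqP; exact: inj.
    by [].
  + by move=> j jJc; rewrite EJ mem_cat jJc orbT.
  + move=> j i' jJc i'S1; rewrite AM_top ?S1q //.
    case: eqP => // E; exfalso; apply: (disj j jJc); by rewrite -E (map_f _ i'S1).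
  + exact: Ind_mapS.
- have pJ : perm_eq J (map (modn^~ n) S1 ++ Jc) by apply: uniq_perm.
  apply: (Ind_perm (S := map (modn^~ n) S1 ++ Jc) (J := S1 ++ map (addn (m %/ n * n)) S')); [by rewrite perm_sym|by []|].
  apply: (@Ind_upper _ _ _ _ _ (map (addn (m %/ n * n)) S')) => //.
  + move=> i /mapP[x xS1 ->]; exists x; first by rewrite mem_cat xS1.
    move=> i' _; rewrite /tr AM_top ?S1q // eq_sym //.
  + by move=> j jS; rewrite mem_cat jS orbT.
  + exact: Ind_mapJ.
Qed.

End Good.

End Part1.
Import Part1.

Module Part2.
Set Implicit Arguments. Unset Strict Implicit. Unset Printing Implicit Defensive.
Import GRing.Theory.

Lemma W_nowrap m n p : p + n <= m -> W m n p = iota p n.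
Proof.
move=> H; rewrite /W -[p]addn0 iotaDl addn0; apply/eq_in_map => t.
rewrite mem_iota => Ht; rewrite modn_small //; lia.
Qed.

Lemma W_wrap m n p : p < m -> n <= m -> m < p + n ->
  W m n p = iota p (m - p) ++ iota 0 (p + n - m).
Proof.
move=> pm nm H; rewrite /W.
set k := p + n - m.
have -> : n = (m - p) + k by rewrite /k; lia.
rewrite iotaD map_cat; congr (_ ++ _).
  rewrite -[p]addn0 iotaDl addn0; apply/eq_in_map => t.
  rewrite mem_iota => Ht; rewrite modn_small //; lia.
rewrite add0n -{1}[m - p]addn0 iotaDl -map_comp -[RHS]map_id.
apply/eq_in_map => t; rewrite mem_iota /= => Ht.
have := @mod_block m 1 (p + (m - p + t)); rewrite mul1n => ->; rewrite /k in Ht; lia.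
Qed.

Section G.
Variable R : pzRingType.

Lemma ident_window m n p : 0 < n ->
  (forall t, t < n -> (p + t) %% m < m %/ n * n /\ (p + t) %% m %% n = (p + t) %% n) ->
  Ind (AM R m n) (W m n p) (iota 0 n) /\ Ind (tr (AM R m n)) (iota 0 n) (W m n p).
Proof.
move=> n0 H.
have EM : map (modn^~ n) (W m n p) = map (fun t => (p + t) %% n) (iota 0 n).
  rewrite /W -map_comp; apply/eq_in_map => t; rewrite mem_iota /= => Ht.
  by case: (H t ltac:(lia)).
have uM : uniq (map (modn^~ n) (W m n p)).
  rewrite EM map_inj_in_uniq ?iota_uniq // => t t'; rewrite !mem_iota => Ht Ht' /eqP.
  rewrite eqn_modDl !modn_small; [move/eqP=> //|lia|lia].
have EJ : iota 0 n =i map (modn^~ n) (W m n p) ++ [::].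
  rewrite cats0 => x; symmetry.
  have [||_ E] := uniq_min_size (s2 := iota 0 n) uM; last exact: E.
  - move=> y; rewrite EM => /mapP[t _ ->]; rewrite mem_iota ltn_mod n0; lia.
  - by rewrite size_iota EM size_map size_iota.
have S1q : forall i, i \in W m n p -> i < m %/ n * n.
  by move=> i /mapP[t]; rewrite mem_iota => Ht ->; case: (H t ltac:(lia)).
have u2 : uniq (map (modn^~ n) (W m n p) ++ [::]) by rewrite cats0.
have [A B] := @Mixed R m n (W m n p) [::] (iota 0 n) [::] n0 S1q uM (iota_uniq _ _) u2 EJ (@Ind_nil R _ _) (@Ind_nil R _ _).
by move: A B; rewrite /= cats0.
Qed.

End G.

End Part2.
Import Part2.

Module Part3.
Set Implicit Arguments. Unset Strict Implicit. Unset Printing Implicit Defensive.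
Import GRing.Theory.

Section G2.
Variable R : pzRingType.

Lemma good_base m n : 0 < n -> n <= m -> m %% n = 0 -> Good R m n.
Proof.
move=> n0 nm r0; set q := m %/ n.
have hm : m = q * n by rewrite {1}(divn_eq m n) r0 addn0.
have q1 : 1 <= q by nia.
split.
- move=> p pm; apply: ident_window => // t tn; split; last by apply: modn_dvdm; rewrite hm dvdn_mull.
  rewrite -/q -hm ltn_mod; lia.
- move=> b bn.
  have EM : map (modn^~ n) (iota (m - b) b) = iota (n - b) b.
    have -> : n - b = m - b - (q - 1) * n by nia.
    apply: map_mod_iota; first by nia.
    move=> x Hx; apply: mod_block; rewrite subn1 prednK //; nia.
  have S1q : forall i, i \in iota (m - b) b -> i < m %/ n * n.
    by move=> i; rewrite mem_iota -/q -hm; lia.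
  have uM : uniq (map (modn^~ n) (iota (m - b) b)) by rewrite EM iota_uniq.
  have u2 : uniq (map (modn^~ n) (iota (m - b) b) ++ [::]) by rewrite cats0.
  have EJ : iota (n - b) b =i map (modn^~ n) (iota (m - b) b) ++ [::] by rewrite cats0 EM.
  have [A B] := @Mixed R m n (iota (m - b) b) [::] (iota (n - b) b) [::] n0 S1q uM (iota_uniq _ _) u2 EJ (@Ind_nil R _ _) (@Ind_nil R _ _).
  by move: A B; rewrite /= cats0.
Qed.

End G2.

End Part3.
Import Part3.

Module Part4.
Set Implicit Arguments. Unset Strict Implicit. Unset Printing Implicit Defensive.
Import GRing.Theory.

Section G3.
Variable R : pzRingType.

Lemma Mixed' m n (S1 S' J Jc L T : seq nat) : 0 < n ->
  (forall i, i \in S1 -> i < m %/ n * n) ->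
  map (modn^~ n) S1 = L -> uniq (L ++ Jc) -> uniq J ->
  (forall x, (x \in J) = (x \in L) || (x \in Jc)) ->
  Ind (fun i j => AM R m n (m %/ n * n + i) j) S' Jc ->
  Ind (fun i j => AM R m n (m %/ n * n + j) i) Jc S' ->
  perm_eq (S1 ++ map (addn (m %/ n * n)) S') T ->
  Ind (AM R m n) T J /\ Ind (tr (AM R m n)) J T.
Proof.
move=> n0 S1q EL uLJ uJ EJ H1 H2 pT.
have uL : uniq L by move: uLJ; rewrite cat_uniq => /andP[].
have [A B] := @Mixed R m n S1 S' J Jc n0 S1q ltac:(by rewrite EL) uJ ltac:(by rewrite EL)
   ltac:(by move=> x; rewrite EL mem_cat EJ) H1 H2.
split.
- exact: Ind_perm pT (fun x => erefl) A.
- exact: Ind_perm (perm_refl J) (perm_mem pT) B.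
Qed.

End G3.

Ltac iuniq := rewrite ?catA; repeat (apply: uniq_cat2; [| exact: iota_uniq | move=> ?; rewrite ?mem_cat !mem_iota; lia]); exact: iota_uniq.

Section G4.
Variable R : pzRingType.

Lemma good_step m n : 0 < n -> n <= m -> 0 < m %% n -> Good R n (m %% n) -> Good R m n.
Proof.
move=> n0 nm r0 [GW GQ].
set q := m %/ n; set r := m %% n in r0 GW GQ *.
have hm : m = q * n + r by rewrite /q /r -divn_eq.
have rn : r < n by rewrite /r ltn_mod.
have q1 : 1 <= q by nia.
set A' := AM R n r.
have B1 : forall S J, Ind (tr A') S J -> Ind (fun i j => AM R m n (q * n + i) j) S J.
  move=> S J H; apply: Ind_ext H => i _ j _; by rewrite /tr /A' AM_bot.
have B2 : forall S J, Ind A' S J -> Ind (fun i j => AM R m n (q * n + j) i) S J.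
  move=> S J H; apply: Ind_ext H => i _ j _; by rewrite /A' AM_bot.
have Id' : forall b, b <= r -> Ind A' (iota 0 b) (iota 0 b) /\ Ind (tr A') (iota 0 b) (iota 0 b).
  move=> b br.
  have E : forall i j, i \in iota 0 b -> A' i j = (i == j)%:R%R.
    move=> i j; rewrite mem_iota => Hi; rewrite /A' AM_top //.
      by rewrite modn_small //; lia.
    have : 0 < n %/ r by rewrite divn_gt0 // ltnW.
    nia.
  split; apply: Ind_ident; rewrite ?iota_uniq // => i j Hi Hj; rewrite /tr E //.
  by rewrite eq_sym.
have modtop : forall x, (q - 1) * n <= x < q * n -> x %% n = x - (q - 1) * n.
  by move=> x Hx; apply: mod_block; have -> : (q - 1).+1 = q by lia.
have modsm : forall x, x < n -> x %% n = x - 0.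
  by move=> x Hx; rewrite modn_small ?subn0.
split.
- move=> p pm.
  case: (leqP (p + n) (q * n)) => [hA|hA].
    apply: ident_window => // t tn; rewrite modn_small; last lia.
    split => //; lia.
  case: (leqP (q * n) p) => [hC|hC].
    set b := m - p.
    have Wp : W m n p = iota p b ++ iota 0 (n - b).
      rewrite W_wrap //; [congr (_ ++ iota 0 _); lia | lia].
    apply: (@Mixed' R m n (iota 0 (n - b)) (iota (r - b) b) (iota 0 n) (iota (n - b) b) (iota 0 (n - b))) => //.
    + move=> i; rewrite mem_iota; nia.
    + by rewrite (@map_mod_iota n 0 0) // => x Hx; apply: modsm; lia.
    + iuniq.
    + exact: iota_uniq.
    + move=> x; rewrite !mem_iota; lia.
    + apply: B1; apply: (GQ b _).2; lia.
    + apply: B2; apply: (GQ b _).1; lia.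
    + rewrite Wp -iotaDl; apply: uniq_perm; [iuniq|iuniq|move=> x; rewrite !mem_cat !mem_iota; lia].
  case: (leqP (p + n) m) => [hB|hD].
    set b := p + n - q * n.
    have Wp : W m n p = iota p n by rewrite W_nowrap.
    apply: (@Mixed' R m n (iota p (q * n - p)) (iota 0 b) (iota 0 n) (iota 0 b) (iota b (n - b))) => //.
    + move=> i; rewrite mem_iota; nia.
    + rewrite (@map_mod_iota n p ((q - 1) * n)); [congr iota; nia | nia |].
      move=> x Hx; apply: modtop; nia.
    + iuniq.
    + exact: iota_uniq.
    + move=> x; rewrite !mem_iota; lia.
    + apply: B1; apply: (Id' b _).2; lia.
    + apply: B2; apply: (Id' b _).1; lia.
    + rewrite Wp -iotaDl; apply: uniq_perm; [iuniq|iuniq|move=> x; rewrite !mem_cat !mem_iota; lia].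
  set h := p + n - m.
  have Wp : W m n p = iota p (m - p) ++ iota 0 h by rewrite W_wrap //; lia.
  apply: (@Mixed' R m n (iota p (q * n - p) ++ iota 0 h) (iota 0 r) (iota 0 n) (iota h r)
                         (iota (h + r) (q * n - p) ++ iota 0 h)) => //.
  + move=> i; rewrite mem_cat !mem_iota; nia.
  + rewrite map_cat (@map_mod_iota n p ((q - 1) * n)); [|nia|move=> x Hx; apply: modtop; nia].
    rewrite (@map_mod_iota n 0 0) //; last by move=> x Hx; apply: modsm; lia.
    congr (iota _ _ ++ _); nia.
  + iuniq.
  + exact: iota_uniq.
  + move=> x; rewrite !mem_cat !mem_iota; nia.
  + apply: B1; have := (GW h ltac:(lia)).2; rewrite W_nowrap; [apply|lia].
  + apply: B2; have := (GW h ltac:(lia)).1; rewrite W_nowrap; [apply|lia].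
  + rewrite Wp -iotaDl; apply: uniq_perm; [iuniq|iuniq|move=> x; rewrite !mem_cat !mem_iota; nia].
- move=> b bn.
  case: (leqP b r) => [br|br].
    apply: (@Mixed' R m n [::] (iota (r - b) b) (iota (n - b) b) (iota (n - b) b) [::]) => //.
    + exact: iota_uniq.
    + exact: iota_uniq.
    + apply: B1; exact: (GQ b br).2.
    + apply: B2; exact: (GQ b br).1.
    + rewrite /= -iotaDl; apply: uniq_perm; [iuniq|iuniq|move=> x; rewrite !mem_iota; nia].
  apply: (@Mixed' R m n (iota (m - b) (b - r)) (iota 0 r) (iota (n - b) b) (iota (n - b) r) (iota (n + r - b) (b - r))) => //.
  + move=> i; rewrite mem_iota; nia.
  + rewrite (@map_mod_iota n (m - b) ((q - 1) * n)); [congr iota; nia | nia |].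
    move=> x Hx; apply: modtop; nia.
  + iuniq.
  + exact: iota_uniq.
  + move=> x; rewrite !mem_iota; nia.
  + apply: B1; have := (GW (n - b) ltac:(lia)).2; rewrite W_nowrap; [apply|lia].
  + apply: B2; have := (GW (n - b) ltac:(lia)).1; rewrite W_nowrap; [apply|lia].
  + rewrite -iotaDl; apply: uniq_perm; [iuniq|iuniq|move=> x; rewrite !mem_cat !mem_iota; nia].
Qed.

Lemma good_all m n : 0 < n -> n <= m -> Good R m n.
Proof.
elim/ltn_ind: n m => n IH m n0 nm.
case: (posnP (m %% n)) => [r0|r0].
  exact: good_base.
apply: good_step => //; apply: IH.
- by rewrite ltn_mod.
- exact: r0.
- by rewrite ltnW // ltn_mod.
Qed.

End G4.

End Part4.
Import Part4.

Module Part5.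
Set Implicit Arguments. Unset Strict Implicit. Unset Printing Implicit Defensive.
Import GRing.Theory.
Local Open Scope ring_scope.

Lemma colsum (F : pzRingType) m n N (Y : 'M[F]_(m, n)) (L : 'M[F]_(m * n, N)) c :
  (mxvec Y *m L) 0 c = \sum_(j < m) \sum_(l < n) Y j l * L (mxvec_index j l) c.
Proof.
rewrite mxE (reindex (uncurry (@mxvec_index m n))) /=; last first.
  exact: curry_mxvec_bij.
rewrite pair_bigA /=; apply: eq_bigr => -[j l] _ /=; by rewrite mxvecE.
Qed.

End Part5.
Import Part5.

Module Part6.
Set Implicit Arguments. Unset Strict Implicit. Unset Printing Implicit Defensive.

Lemma rho_arith a ua j l : 0 < a -> l < ua ->
  (j * ua + l) %/ (a * ua) = j %/ a /\ (j * ua + l) %% (a * ua) %% ua = l.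
Proof.
move=> a0 lu.
have E : j * ua + l = j %/ a * (a * ua) + (j %% a * ua + l).
  rewrite {1}(divn_eq j a) mulnDl mulnA addnA //.
have Hs : j %% a * ua + l < a * ua.
  have : j %% a < a by rewrite ltn_mod.
  nia.
have a0' : 0 < a * ua by nia.
rewrite E divnMDl // (divn_small Hs) addn0 modnMDl (modn_small Hs).
by rewrite modnMDl modn_small.
Qed.

Lemma offset_eq K k j : k < K -> j < K -> (k + (j + K - k) %% K) %% K = j.
Proof.
move=> kK jK; rewrite modnDmr.
have -> : k + (j + K - k) = j + K by lia.
by rewrite modnDr modn_small.
Qed.

Lemma nonside K U D k j : U + D + 2 <= K -> k < K -> j < K -> j != k -> ~~ side K U D k j ->
  D < (j + K - k) %% K < K - U.
Proof.
move=> HK kK jK jk ns; set e := (j + K - k) %% K.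
have eK : e < K by rewrite ltn_mod; lia.
have Ej : (k + e) %% K = j by exact: offset_eq.
apply/andP; split.
  rewrite ltnNge; apply/negP => eD; move: ns; rewrite /side negb_or => /andP[_ /hasPn H].
  case: (posnP e) => [e0|e0].
    by move: jk; rewrite -Ej e0 addn0 modn_small ?eqxx.
  have He : e \in iota 1 D by rewrite mem_iota; lia.
  by have := H e He; rewrite -Ej eqxx.
rewrite ltnNge; apply/negP => eU; move: ns; rewrite /side negb_or => /andP[/hasPn H _].
have He : K - e \in iota 1 U by rewrite mem_iota; lia.
have := H (K - e) He.
have -> : k + K - (K - e) = k + e by lia.
by rewrite Ej eqxx.
Qed.

Lemma pos_arith K D U a ua Da Ka k j l :
  0 < a -> U.+1 = ua * a -> D - U = Da * a -> K = Ka * a -> U <= D -> U + D + 2 <= K ->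
  k < K -> j < K -> l < ua ->
  D < (j + K - k) %% K < K - U ->
  exists2 t, t < Ka - Da - ua & (j %/ a + l) %% Ka = ((k %/ a + ua + Da) %% Ka + t) %% Ka.
Proof.
move=> a0 hU hD hK UD HK kK jK lu /andP[eD eU].
set e := (j + K - k) %% K in eD eU.
have Ej : (k + e) %% K = j by exact: offset_eq.
set w := (k + e) %/ K.
have E1 : k + e = w * Ka * a + j by rewrite -mulnA -hK /w -Ej -divn_eq.
have E2 : (k + e) %/ a = w * Ka + j %/ a by rewrite E1 divnMDl.
set f := (k %% a + e) %/ a.
have E3 : (k + e) %/ a = k %/ a + f.
  by rewrite {1}(divn_eq k a) -addnA divnMDl.
have kma : k %% a < a by rewrite ltn_mod.
have f1 : ua + Da <= f.
  rewrite /f leq_divRL // mulnDl -hU -hD; move: UD eD; clear; lia.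
have uK : ua <= Ka.
  by rewrite -(leq_pmul2r a0) -hU -hK; move: HK; clear; lia.
have f2 : f < Ka - ua + 1.
  rewrite /f ltn_divLR // mulnDl mulnBl -hU -hK; move: kma eU HK; clear; lia.
clearbody f.
exists (f - ua - Da + l); first by move: f1 f2 lu; clear; lia.
rewrite modnDml.
have -> : k %/ a + ua + Da + (f - ua - Da + l) = (k + e) %/ a + l by rewrite E3; move: f1; clear; lia.
by rewrite E2 -addnA modnMDl.
Qed.

Lemma pos_k Ka Da ua s l : Da + ua <= Ka ->
  (s + l) %% Ka = ((s + ua + Da) %% Ka + (Ka - Da - ua + l)) %% Ka.
Proof.
move=> H; rewrite modnDml.
have -> : s + ua + Da + (Ka - Da - ua + l) = (s + l) + Ka by lia.
by rewrite modnDr.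
Qed.

End Part6.
Import Part6.

Module Part7.
Set Implicit Arguments. Unset Strict Implicit. Unset Printing Implicit Defensive.
Import GRing.Theory.

Lemma W_mem m n p t : t < n -> (p + t) %% m \in W m n p.
Proof. by move=> tn; apply: map_f; rewrite mem_iota. Qed.

Lemma mod_inj m p t t' : t < m -> t' < m -> (p + t) %% m = (p + t') %% m -> t = t'.
Proof.
move=> tm t'm /eqP; rewrite eqn_modDl !modn_small //; by move/eqP.
Qed.

Lemma W_uniq m n p : n <= m -> uniq (W m n p).
Proof.
move=> nm; rewrite map_inj_in_uniq ?iota_uniq // => t t'; rewrite !mem_iota => Ht Ht'.
apply: mod_inj; lia.
Qed.

Lemma params K D U : U <= D -> U + D + 2 <= K ->
  [/\ 0 < a_par K D U, U.+1 = ua K D U * a_par K D U, D - U = Da K D U * a_par K D U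
    & K = Ka K D U * a_par K D U].
Proof.
move=> UD HK; set a := a_par K D U.
have a0 : 0 < a by rewrite /a /a_par !gcdn_gt0 ltn0Sn !orbT.
have d1 : a %| K by rewrite /a /a_par dvdn_gcdl.
have d2 : a %| D - U by rewrite /a /a_par (dvdn_trans (dvdn_gcdr _ _)) // dvdn_gcdl.
have d3 : a %| U.+1 by rewrite /a /a_par (dvdn_trans (dvdn_gcdr _ _)) // dvdn_gcdr.
by split; rewrite // /ua /Da /Ka -/a divnK.
Qed.

Local Open Scope ring_scope.

Lemma key (F : finFieldType) K D U (k : 'I_K) (Y : 'M[F]_(K, ua K D U)) :
  (U <= D)%N -> (U + D + 2 <= K)%N ->
  mxvec Y *m L2s F K D U = 0 ->
  (forall (j : 'I_K) (l : 'I_(ua K D U)), side K U D k j -> Y j l = 0) ->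
  forall l, Y k l = 0.
Proof.
move=> UD HK HY Hs l0.
have [a0 hU hD hK] := params UD HK.
have uK : (Da K D U + ua K D U <= Ka K D U)%N.
  by rewrite -(leq_pmul2r a0) mulnDl -hU -hD -hK; lia.
have N0 : (0 < Ncode K D U)%N.
  rewrite /Ncode subn_gt0 -(ltn_pmul2r a0) -hD -hK; lia.
have NK : (Ncode K D U <= Ka K D U)%N by rewrite /Ncode leq_subr.
have NE : Ncode K D U = (Ka K D U - Da K D U)%N by [].
pose rho (j l : nat) := ((j %/ a_par K D U + l) %% Ka K D U)%N.
pose p0 := ((k %/ a_par K D U + ua K D U + Da K D U) %% Ka K D U)%N.
have Ka0 : (0 < Ka K D U)%N by lia.
have G := (good_all F N0 NK).1 p0 (ltn_pmod _ Ka0).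
set A := AM F (Ka K D U) (Ncode K D U) in G.
have col : forall c : 'I_(Ncode K D U),
    \sum_(j < K) \sum_(l < ua K D U) Y j l * A (rho j l) c = 0.
  move=> c; transitivity ((mxvec Y *m L2s F K D U) 0 c); last by rewrite HY mxE.
  rewrite colsum; apply: eq_bigr => j _; apply: eq_bigr => l _; congr (_ * _).
  rewrite /L2s mxE mxvec_index_val /=.
  have [E1 E2] := rho_arith j a0 (ltn_ord l).
  by rewrite E1 E2 air_entryE /A /AM /rho; case: air.
have posK : forall l, rho k l = ((p0 + (Ka K D U - Da K D U - ua K D U + l)) %% Ka K D U)%N.
  by move=> l; rewrite /rho /p0 -pos_k.
have posJ : forall (j : 'I_K) l, (l < ua K D U)%N -> j != k -> ~~ side K U D k j ->
    exists2 t, (t < Ka K D U - Da K D U - ua K D U)%N & rho j l = ((p0 + t) %% Ka K D U)%N.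
  move=> j l lu jk ns.
  have := nonside HK (ltn_ord k) (ltn_ord j) jk ns.
  exact: pos_arith a0 hU hD hK UD HK (ltn_ord k) (ltn_ord j) lu.
have inW : forall (j : 'I_K) (l : 'I_(ua K D U)), ~~ side K U D k j ->
    rho j l \in W (Ka K D U) (Ncode K D U) p0.
  move=> j l ns; case: (eqVneq j k) => [->|jk].
    by rewrite posK; apply: W_mem; rewrite NE; have := ltn_ord l; lia.
  have [t tN ->] := posJ j l (ltn_ord l) jk ns.
  by apply: W_mem; rewrite NE; lia.
pose cf (r : nat) := \sum_(j < K) \sum_(l < ua K D U) (if rho j l == r then Y j l else 0).
have Hsum : forall c, c \in iota 0 (Ncode K D U) ->
    \sum_(r <- W (Ka K D U) (Ncode K D U) p0) cf r * A r c = 0.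
  move=> c; rewrite mem_iota add0n => /andP[_ cN]; rewrite -[RHS](col (Ordinal cN)) /=.
  transitivity (\sum_(r <- W (Ka K D U) (Ncode K D U) p0) \sum_(j < K) \sum_(l < ua K D U)
                   (if rho j l == r then Y j l else 0) * A r c).
    apply: eq_bigr => r _; rewrite mulr_suml; apply: eq_bigr => j _; by rewrite mulr_suml.
  rewrite exchange_big; apply: eq_bigr => j _; rewrite exchange_big; apply: eq_bigr => l _ /=.
  case: (boolP (side K U D k j)) => sj.
    rewrite Hs // mul0r big1 // => r _; by case: ifP; rewrite mul0r.
  rewrite (bigD1_seq (rho j l)) ?W_uniq ?inW //= eqxx big1 ?addr0 // => r /negbTE.
  by rewrite eq_sym => ->; rewrite mul0r.
have HI := G.1 cf Hsum.
have ns_or : forall j : 'I_K, j != k -> side K U D k j \/ ~~ side K U D k j.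
  by move=> j _; case: (side K U D k j); [left|right].
have Hk : ~~ side K U D k k -> True by [].
have rk : rho k l0 \in W (Ka K D U) (Ncode K D U) p0.
  by rewrite posK; apply: W_mem; rewrite NE; have := ltn_ord l0; lia.
rewrite -(HI _ rk) /cf (bigD1 k) //= (bigD1 l0) //= eqxx.
rewrite [X in _ + X + _]big1 ?[X in _ + X]big1 ?addr0 //.
- move=> j jk; apply: big1 => l _.
  case: (boolP (side K U D k j)) => sj.
    by rewrite Hs //; case: ifP.
  have [t tN ->] := posJ j l (ltn_ord l) jk sj.
  rewrite posK; case: eqP => // /mod_inj E; exfalso.
  have h0 := ltn_ord l0; have E' := E ltac:(lia) ltac:(lia); lia.
- move=> l ll0; rewrite !posK; case: eqP => // /mod_inj E; exfalso.
  have h0 := ltn_ord l0; have h1 := ltn_ord l.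
  have E' := E ltac:(lia) ltac:(lia).
  have ll : l = l0 by apply: val_inj; rewrite /=; lia.
  by rewrite ll eqxx in ll0.
Qed.

End Part7.
Import Part7.


Import GRing.Theory Num.Theory.
Unset Implicit Arguments.
Theorem lemma2 (F : finFieldType) (K D U : nat) :
  U <= D -> U + D + 2 <= K ->
  (forall k : 'I_K, decodable U D (L2s F K D U) k) /\
  (((ua K D U)%:R / (Ncode K D U)%:R)%R = ((U.+1)%:R / (K - D + U)%:R)%R :> rat).
Proof.
move=> UD HK; split.
- move=> k.
  exists (fun y S => if [pick X : 'M[F]_(K, ua K D U) | ((mxvec X *m L2s F K D U)%R == y) && (side_info U D k X == S)] is Some X then row k X else 0%R).
  move=> X0; case: pickP => [X /andP[/eqP E1 /eqP E2]|H]; last by have := H X0; rewrite !eqxx.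
  apply/rowP => l; rewrite !mxE; apply/eqP; rewrite -GRing.subr_eq0; apply/eqP.
  have := @key F K D U k (X - X0)%R UD HK _ _ l; rewrite !mxE; apply.
  + by rewrite linearB /= mulmxBl E1 GRing.subrr.
  + move=> j l' sj; rewrite !mxE.
    have := congr1 (fun M : 'M[F]_(K, ua K D U) => M j l') E2; rewrite /= !mxE sj => ->.
    by rewrite GRing.subrr.
- have [a0 hU hD hK] := params UD HK.
  have uK : Da K D U + ua K D U <= Ka K D U.
    by rewrite -(leq_pmul2r a0) mulnDl -hU -hD -hK; lia.
  have EN : K - D + U = Ncode K D U * a_par K D U.
    rewrite /Ncode mulnBl -hD -hK; lia.
  rewrite hU EN !natrM -mulf_div divff ?GRing.mulr1 // pnatr_eq0 -lt0n //.
Qed.
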